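(* Let $r\ge 0$ and $d\ge r+1$ be integers and $R=\mathbb{R}[x,y,z]$. Let $\ell_1,\ell_2,\ell_3\in R$ be homogeneous linear forms that are the homogenizations (with respect to $z$) of equations of three distinct lines in $\mathbb{R}^2$ passing through a common point $p$, and let $L\in R$ be the homogenization of an equation of a line in $\mathbb{R}^2$ not containing $p$. Then for every homogeneous polynomial $g\in R$ of degree $d$ there exist homogeneous $u,v\in R$ of degree $d$ and homogeneous $w\in R$ of degree $r-1$ such that \[\ell_3^{r+1}g=\ell_1^{r+1}u+\ell_2^{r+1}v+L^{d-r+1}\ell_3^{r+1}w,\] with $w=0$ when $r=0$. *)

(* Defs.v *)
From HB Require Import structures.
From mathcomp Require Import all_boot all_algebra.
From mathcomp Require Import mpoly.
From mathcomp Require Import reals.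
Set Implicit Arguments. Unset Strict Implicit. Unset Printing Implicit Defensive.
Import GRing.Theory Num.Theory.
Local Open Scope ring_scope.

Definition affine_line {R : realType} (a b c : R) : R * R -> bool :=
  fun q => a * q.1 + b * q.2 + c == 0.

Definition is_line_eq {R : realType} (a b c : R) : Prop := (a, b) != (0, 0).

(* Homogenization with respect to z of a x + b y + c : a x + b y + c z in R[x,y,z],
   variables x = 'X_0, y = 'X_1, z = 'X_2. *)
Definition homogenize_lin {R : realType} (a b c : R) : {mpoly R[3]} :=
  a *: 'X_(0 : 'I_3) + b *: 'X_(1 : 'I_3) + c *: 'X_(2 : 'I_3).

(* Main.v *)
Require Import Defs.
From Stdlib Require FunctionalExtensionality.
From HB Require Import structures.
From mathcomp Require Import all_boot all_algebra.
From mathcomp Require Import mpoly.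
From mathcomp Require Import reals.
From mathcomp Require Import ring lra zify.
Import GRing.Theory Num.Theory.
Local Open Scope ring_scope.

Module Helpers.
Set Implicit Arguments. Unset Strict Implicit.
Section Gen.
Variable R : realType.
Variables l1 l2 L : {mpoly R[3]}.
Hypotheses (hl1 : l1 \is 1.-homog) (hl2 : l2 \is 1.-homog) (hL : L \is 1.-homog).

Inductive S : nat -> {mpoly R[3]} -> Prop :=
| S1 : S 0 1
| Sz n : S n 0
| Sadd n f g : S n f -> S n g -> S n (f + g)
| Ssc n c f : S n f -> S n (c *: f)
| Sl1 n f : S n f -> S n.+1 (l1 * f)
| Sl2 n f : S n f -> S n.+1 (l2 * f)
| SL n f : S n f -> S n.+1 (L * f).

Inductive M : nat -> nat -> {mpoly R[3]} -> Prop :=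
| M0 n h : h \is n.-homog -> M 0 n h
| Mz m n : M m n 0
| Madd m n f g : M m n f -> M m n g -> M m n (f + g)
| M1 m n f : M m n f -> M m.+1 n.+1 (l1 * f)
| M2 m n f : M m n f -> M m.+1 n.+1 (l2 * f).

Lemma S_homog n f : S n f -> f \is n.-homog.
Proof.
elim=> {n f}.
- exact: dhomog1.
- move=> n; exact: dhomog0.
- by move=> n f g _ hf _ hg; apply: dhomogD.
- by move=> n c f _ hf; apply: dhomogZ.
- by move=> n f _ hf; rewrite -[n.+1]add1n; apply: dhomogM.
- by move=> n f _ hf; rewrite -[n.+1]add1n; apply: dhomogM.
- by move=> n f _ hf; rewrite -[n.+1]add1n; apply: dhomogM.
Qed.

Lemma S_mul a f b h : S a f -> S b h -> S (a + b) (f * h).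
Proof.
move=> Hf Hh; elim: Hf => {a f}.
- by rewrite mul1r.
- by move=> n; rewrite mul0r; apply: Sz.
- by move=> n f g _ h1 _ h2; rewrite mulrDl; apply: Sadd.
- by move=> n c f _ h1; rewrite -scalerAl; apply: Ssc.
- by move=> n f _ h1; rewrite -mulrA addSn; apply: Sl1.
- by move=> n f _ h1; rewrite -mulrA addSn; apply: Sl2.
- by move=> n f _ h1; rewrite -mulrA addSn; apply: SL.
Qed.

Lemma S_pow a f k : S a f -> S (a * k) (f ^+ k).
Proof.
move=> Hf; elim: k => [|k IH]; first by rewrite muln0 expr0; apply: S1.
by rewrite exprS mulnS; apply: S_mul.
Qed.

Lemma M_homog m n f : M m n f -> f \is n.-homog.
Proof.
elim=> {m n f}.
- by [].
- move=> m n; exact: dhomog0.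
- by move=> m n f g _ hf _ hg; apply: dhomogD.
- by move=> m n f _ hf; rewrite -[n.+1]add1n; apply: dhomogM.
- by move=> m n f _ hf; rewrite -[n.+1]add1n; apply: dhomogM.
Qed.

Lemma M_mulh m n f k h : M m n f -> h \is k.-homog -> M m (n + k) (f * h).
Proof.
move=> Hf Hh; elim: Hf => {m n f}.
- by move=> n f hf; apply: M0; apply: dhomogM.
- by move=> m n; rewrite mul0r; apply: Mz.
- by move=> m n f g _ h1 _ h2; rewrite mulrDl; apply: Madd.
- by move=> m n f _ h1; rewrite -mulrA addSn; apply: M1.
- by move=> m n f _ h1; rewrite -mulrA addSn; apply: M2.
Qed.

Lemma M_mulL m n f : M m n f -> M m n.+1 (L * f).
Proof. by move=> Hf; rewrite mulrC -addn1; apply: M_mulh. Qed.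

Lemma M_scale m n c f : M m n f -> M m n (c *: f).
Proof.
elim=> {m n f}.
- by move=> n f hf; apply: M0; apply: dhomogZ.
- by move=> m n; rewrite scaler0; apply: Mz.
- by move=> m n f g _ h1 _ h2; rewrite scalerDr; apply: Madd.
- by move=> m n f _ h1; rewrite scalerAr; apply: M1.
- by move=> m n f _ h1; rewrite scalerAr; apply: M2.
Qed.

Lemma M_l3 (l3 : {mpoly R[3]}) al be : l3 = al *: l1 + be *: l2 ->
  forall k m n f, M m n f -> M (m + k) (n + k) (l3 ^+ k * f).
Proof.
move=> hl3; elim=> [|k IH] m n f Hf; first by rewrite !addn0 expr0 mul1r.
rewrite exprS -mulrA !addnS; move: (IH _ _ _ Hf) => H.
rewrite {1}hl3 mulrDl -!scalerAl; apply: Madd; apply: M_scale.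
- exact: M1.
- exact: M2.
Qed.

Lemma M_C m n f : M m n f -> (m <= n)%N -> forall a b, (a + b <= m.+1)%N ->
  exists u v, [/\ u \is (n - a)%N.-homog, v \is (n - b)%N.-homog &
    f = l1 ^+ a * u + l2 ^+ b * v].
Proof.
elim=> {m n f}.
- move=> n h hh _ a b hab; case: a hab => [|a] hab.
    exists h, 0; split; [by rewrite subn0|exact: dhomog0|by rewrite expr0 mul1r mulr0 addr0].
  have -> : b = 0%N by lia.
  exists 0, h; split; [exact: dhomog0|by rewrite subn0|by rewrite expr0 mul1r mulr0 add0r].
- move=> m n _ a b _; exists 0, 0; split; try exact: dhomog0.
  by rewrite !mulr0 addr0.
- move=> m n f g _ IHf _ IHg mn a b hab.
  have [u1 [v1 [hu1 hv1 ->]]] := IHf mn a b hab.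
  have [u2 [v2 [hu2 hv2 ->]]] := IHg mn a b hab.
  exists (u1 + u2), (v1 + v2); split; try by apply: dhomogD.
  by rewrite !mulrDr addrACA.
- move=> m n f Hf IH mn a b hab; case: a hab => [|a] hab.
    exists (l1 * f), 0; split; [|exact: dhomog0|by rewrite expr0 mul1r mulr0 addr0].
    by rewrite subn0 -[n.+1]add1n; apply: dhomogM => //; apply: M_homog Hf.
  case: a hab => [|a] hab.
    exists f, 0; split; [by rewrite subSS subn0; apply: M_homog Hf|exact: dhomog0|].
    by rewrite expr1 mulr0 addr0.
  have mn' : (m <= n)%N by lia.
  have [u [v [hu hv ->]]] := IH mn' a.+1 b ltac:(lia).
  exists u, (l1 * v); split.
  + by rewrite subSS.
  + have -> : (n.+1 - b = 1 + (n - b))%N by lia.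
    exact: dhomogM.
  + by rewrite mulrDr mulrA -exprS mulrCA.
- move=> m n f Hf IH mn a b hab; case: b hab => [|b] hab.
    exists 0, (l2 * f); split; [exact: dhomog0| |by rewrite expr0 mul1r mulr0 add0r].
    by rewrite subn0 -[n.+1]add1n; apply: dhomogM => //; apply: M_homog Hf.
  case: b hab => [|b] hab.
    exists 0, f; split; [exact: dhomog0|by rewrite subSS subn0; apply: M_homog Hf|].
    by rewrite expr1 mulr0 add0r.
  have mn' : (m <= n)%N by lia.
  have [u [v [hu hv ->]]] := IH mn' a b.+1 ltac:(lia).
  exists (l2 * u), v; split.
  + have -> : (n.+1 - a = 1 + (n - a))%N by lia.
    exact: dhomogM.
  + by rewrite subSS.
  + by rewrite mulrDr mulrCA [l2 * (l2 ^+ _ * _)]mulrA -exprS.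
Qed.

Lemma S_A n f : S n f -> forall e, (e <= n.+1)%N ->
  exists w, w \is (n - e)%N.-homog /\ M (n.+1 - e) n (f - L ^+ e * w).
Proof.
elim=> {n f}.
- move=> e he; case: e he => [|[|e]] he //.
  + exists 1; split; first exact: dhomog1.
    by rewrite expr0 mul1r subrr; apply: Mz.
  + exists 0; split; first exact: dhomog0.
    by rewrite mulr0 subr0; apply: M0; apply: dhomog1.
- move=> n e he; exists 0; split; first exact: dhomog0.
  by rewrite mulr0 subr0; apply: Mz.
- move=> n f g _ IHf _ IHg e he.
  have [w1 [hw1 H1]] := IHf e he; have [w2 [hw2 H2]] := IHg e he.
  exists (w1 + w2); split; first exact: dhomogD.
  by rewrite mulrDr opprD addrACA; apply: Madd.
- move=> n c f _ IH e he; have [w [hw H]] := IH e he.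
  exists (c *: w); split; first exact: dhomogZ.
  by rewrite -scalerAr -scalerBr; apply: M_scale.
- move=> n f Hf IH e he.
  have [hen|hen] := leqP e n.
    have [w [hw H]] := IH e ltac:(lia).
    exists (l1 * w); split.
      have -> : (n.+1 - e = 1 + (n - e))%N by lia.
      exact: dhomogM.
    have -> : (n.+2 - e = (n.+1 - e).+1)%N by lia.
    by rewrite mulrCA -mulrBr; apply: M1.
  exists 0; split; first exact: dhomog0.
  rewrite mulr0 subr0; have [->|hne] := eqVneq e n.+1.
  + rewrite subSn // subnn; apply: M1; apply: M0; exact: S_homog.
  + have -> : (n.+2 - e = 0)%N by lia.
    apply: M0; rewrite -[n.+1]add1n; apply: dhomogM => //; exact: S_homog.
- move=> n f Hf IH e he.
  have [hen|hen] := leqP e n.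
    have [w [hw H]] := IH e ltac:(lia).
    exists (l2 * w); split.
      have -> : (n.+1 - e = 1 + (n - e))%N by lia.
      exact: dhomogM.
    have -> : (n.+2 - e = (n.+1 - e).+1)%N by lia.
    by rewrite mulrCA -mulrBr; apply: M2.
  exists 0; split; first exact: dhomog0.
  rewrite mulr0 subr0; have [->|hne] := eqVneq e n.+1.
  + rewrite subSn // subnn; apply: M2; apply: M0; exact: S_homog.
  + have -> : (n.+2 - e = 0)%N by lia.
    apply: M0; rewrite -[n.+1]add1n; apply: dhomogM => //; exact: S_homog.
- move=> n f Hf IH [|e] he.
    exists (L * f); split.
      by rewrite subn0 -[n.+1]add1n; apply: dhomogM => //; exact: S_homog.
    by rewrite expr0 mul1r subrr; apply: Mz.
  have [w [hw H]] := IH e ltac:(lia).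
  exists w; split; first by rewrite subSS.
  rewrite subSS exprS -mulrA -mulrBr; exact: M_mulL.
Qed.

End Gen.

Lemma hl_homog (R : realType) (a b c : R) : homogenize_lin a b c \is 1.-homog.
Proof.
rewrite /homogenize_lin; apply: dhomogD; first apply: dhomogD.
  all: by apply: dhomogZ; rewrite dhomogX; apply/eqP; exact: mdeg1.
Qed.

Lemma hl_comb2 (R : realType) (s t a b c a' b' c' : R) :
  s *: homogenize_lin a b c + t *: homogenize_lin a' b' c' =
  homogenize_lin (s * a + t * a') (s * b + t * b') (s * c + t * c').
Proof.
rewrite /homogenize_lin -!mul_mpolyC !rmorphD !rmorphM /=. ring.
Qed.

Lemma hl_comb3 (R : realType) (s t u a b c a' b' c' a'' b'' c'' : R) :
  s *: homogenize_lin a b c + t *: homogenize_lin a' b' c' + u *: homogenize_lin a'' b'' c'' =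
  homogenize_lin (s * a + t * a' + u * a'') (s * b + t * b' + u * b'') (s * c + t * c' + u * c'').
Proof.
rewrite /homogenize_lin -!mul_mpolyC !rmorphD !rmorphM /=. ring.
Qed.

Lemma key (R : realType) (a b a' b' u v : R) : (a, b) != (0, 0) ->
  a * b' - a' * b = 0 -> a * u + b * v = 0 -> a' * u + b' * v = 0.
Proof.
move=> hab hD huv.
have E1 : a * (a' * u + b' * v) = a' * (a * u + b * v) + v * (a * b' - a' * b) by ring.
have E2 : b * (a' * u + b' * v) = b' * (a * u + b * v) - u * (a * b' - a' * b) by ring.
rewrite huv hD !mulr0 addr0 in E1; rewrite huv hD !mulr0 subr0 in E2.
move: hab; rewrite xpair_eqE negb_and => /orP [] hn.
  by move/eqP: E1; rewrite mulf_eq0 (negbTE hn) => /eqP.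
by move/eqP: E2; rewrite mulf_eq0 (negbTE hn) => /eqP.
Qed.

Lemma same_line (R : realType) (a b c a' b' c' p1 p2 : R) :
  is_line_eq a b c -> is_line_eq a' b' c' ->
  a * p1 + b * p2 + c = 0 -> a' * p1 + b' * p2 + c' = 0 ->
  a * b' - a' * b = 0 -> affine_line a b c = affine_line a' b' c'.
Proof.
rewrite /is_line_eq => h1 h2 e1 e2 hD.
have hc : c = - (a * p1 + b * p2) by apply/eqP; rewrite -subr_eq0 -e1; apply/eqP; ring.
have hc' : c' = - (a' * p1 + b' * p2) by apply/eqP; rewrite -subr_eq0 -e2; apply/eqP; ring.
apply: FunctionalExtensionality.functional_extensionality => -[q1 q2].
rewrite /affine_line /= hc hc'.
have F : forall (x y : R), x * q1 + y * q2 + - (x * p1 + y * p2) = x * (q1 - p1) + y * (q2 - p2)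
  by move=> x y; ring.
rewrite !F //.
apply/eqP/eqP => H.
  exact: (@key _ a b a' b' _ _ h1 hD H).
apply: (@key _ a' b' a b _ _ h2 _ H); rewrite -[RHS]oppr0 -hD; ring.
Qed.
End Helpers.
Import Helpers.

Theorem lemma5p2 (R : realType) (r d : nat) (hd : (r + 1 <= d)%N)
  (a1 b1 c1 a2 b2 c2 a3 b3 c3 aL bL cL : R) (p : R * R)
  (h1 : is_line_eq a1 b1 c1) (h2 : is_line_eq a2 b2 c2) (h3 : is_line_eq a3 b3 c3)
  (hL : is_line_eq aL bL cL)
  (hp1 : affine_line a1 b1 c1 p) (hp2 : affine_line a2 b2 c2 p)
  (hp3 : affine_line a3 b3 c3 p)
  (hd12 : affine_line a1 b1 c1 <> affine_line a2 b2 c2)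
  (hd13 : affine_line a1 b1 c1 <> affine_line a3 b3 c3)
  (hd23 : affine_line a2 b2 c2 <> affine_line a3 b3 c3)
  (hpL : ~~ affine_line aL bL cL p) :
  let l1 := homogenize_lin a1 b1 c1 in
  let l2 := homogenize_lin a2 b2 c2 in
  let l3 := homogenize_lin a3 b3 c3 in
  let L := homogenize_lin aL bL cL in
  forall g : {mpoly R[3]}, g \is d.-homog ->
  exists u v w : {mpoly R[3]},
    [/\ u \is d.-homog, v \is d.-homog, w \is (r - 1)%N.-homog,
        (r = 0%N -> w = 0) &
        l3 ^+ r.+1 * g = l1 ^+ r.+1 * u + l2 ^+ r.+1 * v + L ^+ (d - r + 1) * l3 ^+ r.+1 * w].
Proof.
move=> l1 l2 l3 L g hg.
case: p hp1 hp2 hp3 hpL hd12 => p1 p2 hp1 hp2 hp3 hK hd12.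
rewrite /affine_line /= in hp1 hp2 hp3 hK.
move/eqP: hp1 => e1; move/eqP: hp2 => e2; move/eqP: hp3 => e3.
have hD : a1 * b2 - a2 * b1 != 0.
  by apply/eqP => hD; apply: hd12; apply: (@same_line _ a1 b1 c1 a2 b2 c2 p1 p2).
have hc1 : c1 = - (a1 * p1 + b1 * p2) by apply/eqP; rewrite -subr_eq0 -e1; apply/eqP; ring.
have hc2 : c2 = - (a2 * p1 + b2 * p2) by apply/eqP; rewrite -subr_eq0 -e2; apply/eqP; ring.
have hc3 : c3 = - (a3 * p1 + b3 * p2) by apply/eqP; rewrite -subr_eq0 -e3; apply/eqP; ring.
move: hK; set K := aL * p1 + bL * p2 + cL => hK.
have hcL : cL = K - (aL * p1 + bL * p2) by rewrite /K; ring.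
clearbody K.
set D := a1 * b2 - a2 * b1 in hD.
have hl3 : l3 = ((a3 * b2 - a2 * b3) / D) *: l1 + ((a1 * b3 - a3 * b1) / D) *: l2.
  rewrite /l3 /l1 /l2 hl_comb2 hc1 hc2 hc3 /D; congr homogenize_lin; field; exact: hD.
have hh1 : l1 \is 1.-homog by exact: hl_homog.
have hh2 : l2 \is 1.-homog by exact: hl_homog.
have hhL : L \is 1.-homog by exact: hl_homog.
pose zs := (bL * a2 - aL * b2) / (D * K).
pose zt := (aL * b1 - bL * a1) / (D * K).
have hcomb : forall (x y z : R) (s t u : R),
    s * a1 + t * a2 + u * aL = x -> s * b1 + t * b2 + u * bL = y ->
    s * c1 + t * c2 + u * cL = z ->
    homogenize_lin x y z = s *: l1 + t *: l2 + u *: L.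
  by move=> x y z s t u <- <- <-; rewrite /l1 /l2 /L hl_comb3.
have hX : forall i : 'I_3, S l1 l2 L 1 'X_i.
  have hS : forall s t u, S l1 l2 L 1 (s *: l1 + t *: l2 + u *: L).
    move=> s t u.
    apply: Sadd; first apply: Sadd.
    - by apply: Ssc; rewrite -[X in S _ _ _ _ X]mulr1; apply: Sl1; apply: S1.
    - by apply: Ssc; rewrite -[X in S _ _ _ _ X]mulr1; apply: Sl2; apply: S1.
    - by apply: Ssc; rewrite -[X in S _ _ _ _ X]mulr1; apply: SL; apply: S1.
  move=> i; case: i => -[|[|[|//]]] hi.
  - have -> : 'X_(Ordinal hi) = homogenize_lin 1 0 0 :> {mpoly R[3]}.
      rewrite /homogenize_lin scale1r !scale0r !addr0; congr mpolyX; congr mnm1; exact: val_inj.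
    rewrite (hcomb _ _ _ (b2 / D + p1 * zs) (- b1 / D + p1 * zt) (p1 / K)); first exact: hS.
    1-3: rewrite /zs /zt ?hc1 ?hc2 ?hcL /D; field; rewrite ?hD ?hK ?mulf_neq0 //.
  - have -> : 'X_(Ordinal hi) = homogenize_lin 0 1 0 :> {mpoly R[3]}.
      rewrite /homogenize_lin scale1r !scale0r add0r addr0; congr mpolyX; congr mnm1; exact: val_inj.
    rewrite (hcomb _ _ _ (- a2 / D + p2 * zs) (a1 / D + p2 * zt) (p2 / K)); first exact: hS.
    1-3: rewrite /zs /zt ?hc1 ?hc2 ?hcL /D; field; rewrite ?hD ?hK ?mulf_neq0 //.
  - have -> : 'X_(Ordinal hi) = homogenize_lin 0 0 1 :> {mpoly R[3]}.
      rewrite /homogenize_lin scale1r !scale0r !add0r; congr mpolyX; congr mnm1; exact: val_inj.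
    rewrite (hcomb _ _ _ zs zt (1 / K)); first exact: hS.
    1-3: rewrite /zs /zt ?hc1 ?hc2 ?hcL /D; field; rewrite ?hD ?hK ?mulf_neq0 //.
have hmon : forall m : 'X_{1..3}, S l1 l2 L (mdeg m) 'X_[m].
  move=> m; rewrite mpolyXE_id mdegE.
  apply: (big_ind2 (fun n f => S l1 l2 L n f)); first exact: S1.
    by move=> x1 x2 y1 y2; apply: S_mul.
  by move=> i _; rewrite -{1}[m i]mul1n; apply: S_pow.
have hSg : S l1 l2 L d g.
  rewrite (mpolyE g) big_seq.
  apply: (big_ind (S l1 l2 L d)); first exact: Sz.
    by move=> x y; apply: Sadd.
  move=> m hm; apply: Ssc; rewrite -(dhomog_mf hg hm); exact: hmon.
have [w [f0 [hw hw0 hM hgw]]] : exists w f0, [/\ w \is (r - 1)%N.-homog, (r = 0%N -> w = 0),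
    M l1 l2 r d f0 & g = f0 + L ^+ (d - r + 1) * w].
  case: r hd => [|r] hd.
    exists 0, g; split => //; first exact: dhomog0.
      by apply: M0.
    by rewrite mulr0 addr0.
  have [w [hw hM]] := S_A hh1 hh2 hhL hSg (e := (d - r.+1 + 1)%N) ltac:(lia).
  exists w, (g - L ^+ (d - r.+1 + 1) * w); split => //.
  - have E : (d - (d - r.+1 + 1) = r.+1 - 1)%N by lia.
    by rewrite E in hw.
  - have E : (d.+1 - (d - r.+1 + 1) = r.+1)%N by lia.
    by rewrite E in hM.
  - by rewrite subrK.
have HM := M_l3 hl3 r.+1 hM.
have [u [v [hu hv huv]]] := M_C hh1 hh2 hhL HM ltac:(lia) (a:=r.+1) (b:=r.+1) ltac:(lia).
exists u, v, w; split => //.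
- by rewrite addnK in hu.
- by rewrite addnK in hv.
rewrite {1}hgw mulrDr huv; congr (_ + _).
by rewrite mulrCA mulrA.
Qed.
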